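(* Let $n\ge 2$ and let $q\in\mathbb{C}$, $q\neq 0,\pm1$, not a root of unity. Then the assignment $$\phi(I_{i+1,i})=\tilde I_{i+1,i}\otimes 1+k_i\otimes I_{i+1,i},\qquad i=1,\dots,n-1,$$ extends to a unital algebra homomorphism $\phi:U'_q(\mathrm{so}_n)\to U_q(\mathrm{sl}_n)\otimes U'_q(\mathrm{so}_n)$ which makes $U'_q(\mathrm{so}_n)$ a (left) $U_q(\mathrm{sl}_n)$-comodule algebra, i.e. $(\Delta\otimes\mathrm{id})\circ\phi=(\mathrm{id}\otimes\phi)\circ\phi$ and $(\varepsilon\otimes\mathrm{id})\circ\phi=\mathrm{id}$. Moreover, if $\iota:U'_q(\mathrm{so}_n)\to U_q(\mathrm{sl}_n)$ denotes the algebra homomorphism $I_{i+1,i}\mapsto \tilde I_{i+1,i}$, then $(\mathrm{id}\otimes\iota)\circ\phi=\Delta\circ\iota$, i.e. the coaction $\phi$ reduces to the comultiplication $\Delta$ of $U_q(\mathrm{sl}_n)$ on the image of $U'_q(\mathrm{so}_n)$.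
   Context: Fix $q\in\mathbb{C}$, $q\ne0,\pm1$, not a root of unity, and a square root $q^{1/2}$. The algebra $U'_q(\mathrm{so}_n)$ is the unital complex associative algebra generated by $I_{21},I_{32},\dots,I_{n,n-1}$ with relations $I_{j,j-1}^2I_{j-1,j-2}+I_{j-1,j-2}I_{j,j-1}^2-(q+q^{-1})I_{j,j-1}I_{j-1,j-2}I_{j,j-1}=-I_{j-1,j-2}$, $I_{j-1,j-2}^2I_{j,j-1}+I_{j,j-1}I_{j-1,j-2}^2-(q+q^{-1})I_{j-1,j-2}I_{j,j-1}I_{j-1,j-2}=-I_{j,j-1}$, and $[I_{i,i-1},I_{j,j-1}]=0$ if $|i-j|>1$. The Drinfeld–Jimbo algebra $U_q(\mathrm{sl}_n)$ is generated by $e_i,f_i,k_i,k_i^{-1}$ ($i=1,\dots,n-1$) with relations $k_ik_i^{-1}=k_i^{-1}k_i=1$, $k_ik_j=k_jk_i$, $k_ie_jk_i^{-1}=q^{a_{ij}}e_j$, $k_if_jk_i^{-1}=q^{-a_{ij}}f_j$, $[e_i,e_j]=[f_i,f_j]=0$ for $|i-j|>1$, $[e_i,f_j]=\delta_{ij}(k_i-k_i^{-1})/(q-q^{-1})$, and the quantum Serre relations $e_i^2e_{i\pm1}-(q+q^{-1})e_ie_{i\pm1}e_i+e_{i\pm1}e_i^2=0$ and the same for $f$'s; here $a_{ii}=2$, $a_{i,i\pm1}=-1$, $a_{ij}=0$ otherwise. It is a Hopf algebra with $\Delta(e_i)=e_i\otimes k_i^{-1}+1\otimes e_i$, $\Delta(f_i)=f_i\otimes1+k_i\otimes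 f_i$, $\Delta(k_i)=k_i\otimes k_i$, counit $\varepsilon(e_i)=\varepsilon(f_i)=0$, $\varepsilon(k_i)=1$. Put $\tilde I_{i+1,i}=f_i-q^{-1}k_ie_i\in U_q(\mathrm{sl}_n)$; these elements satisfy the defining relations of $U'_q(\mathrm{so}_n)$. *)

(* Defs.v *)
From HB Require Import structures.
From mathcomp Require Import all_boot all_order all_algebra.
From mathcomp Require Import Rstruct complex.
From Stdlib Require Import Rdefinitions.
Set Implicit Arguments. Unset Strict Implicit. Unset Printing Implicit Defensive.
Import Order.TTheory GRing.Theory Num.Theory.
Local Open Scope ring_scope.

Definition Cx : fieldType := complex Rdefinitions.R.

Section Presented.
Variable K : fieldType.

Inductive term (X : Type) : Type :=
| tGen of X
| tC of K
| tAdd of term X & term X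
| tMul of term X & term X.
Arguments tC {X}.

Definition tSub X (a b : term X) := tAdd a (tMul (tC (-1)) b).
Definition tOpp X (a : term X) := tMul (tC (-1)) a.

Fixpoint subst (X Y : Type) (f : X -> term Y) (t : term X) : term Y :=
  match t with
  | tGen x => f x
  | tC c => tC c
  | tAdd a b => tAdd (subst f a) (subst f b)
  | tMul a b => tMul (subst f a) (subst f b)
  end.

Definition relation (X : Type) := term X -> term X -> Prop.

(** The congruence generated by the unital associative K-algebra axioms
   and the defining relations: terms modulo [eqv r] form the algebra
   K<X>/(a - b : r a b). *)
Inductive eqv (X : Type) (r : relation X) : term X -> term X -> Prop :=
| eqv_rel a b : r a b -> eqv r a b
| eqv_refl a : eqv r a a
| eqv_sym a b : eqv r a b -> eqv r b a
| eqv_trans a b c : eqv r a b -> eqv r b c -> eqv r a c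
| eqv_add a a' b b' : eqv r a a' -> eqv r b b' -> eqv r (tAdd a b) (tAdd a' b')
| eqv_mul a a' b b' : eqv r a a' -> eqv r b b' -> eqv r (tMul a b) (tMul a' b')
| eqv_addA a b c : eqv r (tAdd (tAdd a b) c) (tAdd a (tAdd b c))
| eqv_addC a b : eqv r (tAdd a b) (tAdd b a)
| eqv_add0 a : eqv r (tAdd (tC 0) a) a
| eqv_addN a : eqv r (tAdd a (tMul (tC (-1)) a)) (tC 0)
| eqv_mulA a b c : eqv r (tMul (tMul a b) c) (tMul a (tMul b c))
| eqv_mul1l a : eqv r (tMul (tC 1) a) a
| eqv_mul1r a : eqv r (tMul a (tC 1)) a
| eqv_mulDl a b c : eqv r (tMul (tAdd a b) c) (tAdd (tMul a c) (tMul b c))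
| eqv_mulDr a b c : eqv r (tMul a (tAdd b c)) (tAdd (tMul a b) (tMul a c))
| eqv_Cadd (c d : K) : eqv r (tAdd (tC c) (tC d)) (tC (c + d))
| eqv_Cmul (c d : K) : eqv r (tMul (tC c) (tC d)) (tC (c * d))
| eqv_Ccomm (c : K) a : eqv r (tMul (tC c) a) (tMul a (tC c)).

Record pres := Pres { gens : Type; rels : relation gens }.

(** An assignment of generators extends to a (unital) algebra
   homomorphism iff it respects the congruence. *)
Definition is_alg_hom (P Q : pres) (f : gens P -> term (gens Q)) : Prop :=
  forall a b, eqv (@rels P) a b -> eqv (@rels Q) (subst f a) (subst f b).

(** Tensor product A (x) B of presented algebras: generators of both,
   both sets of relations, and the two families of generators commute.
   Here [tGen (inl x)] stands for x (x) 1 and [tGen (inr y)] for 1 (x) y. *)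
Inductive tens_rel (X Y : Type) (r1 : relation X) (r2 : relation Y) :
  relation (X + Y) :=
| tr_l a b : r1 a b ->
    tens_rel r1 r2 (subst (fun x => tGen (inl x)) a) (subst (fun x => tGen (inl x)) b)
| tr_r a b : r2 a b ->
    tens_rel r1 r2 (subst (fun y => tGen (inr y)) a) (subst (fun y => tGen (inr y)) b)
| tr_comm x y :
    tens_rel r1 r2 (tMul (tGen (inl x)) (tGen (inr y)))
                   (tMul (tGen (inr y)) (tGen (inl x))).

Definition tensor (P Q : pres) : pres :=
  Pres (@tens_rel (gens P) (gens Q) (@rels P) (@rels Q)).

End Presented.
Arguments tC {K X}.
Arguments rels {K} p.
Arguments tGen {K X}.
Arguments tAdd {K X}.
Arguments tMul {K X}.

Section Quantum.
Variables (q : Cx) (n : nat).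

(** index i : 'I_n.-1 stands for the paper's index i+1 in {1,...,n-1} *)
Local Notation idx := 'I_n.-1.

Definition adjacent (i j : idx) : bool := (i.+1 == j :> nat) || (j.+1 == i :> nat).
Definition far (i j : idx) : bool := ltn i.+1 j || ltn j.+1 i.

Definition cartan (i j : idx) : int :=
  if i == j then 2%:Z else if adjacent i j then (-1)%:~R else 0.

Inductive slgen : Type :=
| gE of idx
| gF of idx
| gK of idx
| gKi of idx.

Local Notation T := (term Cx slgen).
Local Notation "a + b" := (tAdd a b).
Local Notation "a * b" := (tMul a b).
Local Notation "a - b" := (tSub a b).
Local Notation "c %:T" := (tC c).

Definition qint2 : Cx := q + q^-1.

Inductive sl_rel : relation Cx slgen :=
| sl_kki i : sl_rel ((tGen (gK i)) * (tGen (gKi i))) (1%:T)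
| sl_kik i : sl_rel ((tGen (gKi i)) * (tGen (gK i))) (1%:T)
| sl_kk i j : sl_rel ((tGen (gK i)) * (tGen (gK j))) ((tGen (gK j)) * (tGen (gK i)))
| sl_ke i j : sl_rel ((tGen (gK i)) * (tGen (gE j)) * (tGen (gKi i))) ((q ^ cartan i j)%:T * (tGen (gE j)))
| sl_kf i j : sl_rel ((tGen (gK i)) * (tGen (gF j)) * (tGen (gKi i))) ((q ^ (- cartan i j))%:T * (tGen (gF j)))
| sl_ee i j : far i j -> sl_rel ((tGen (gE i)) * (tGen (gE j))) ((tGen (gE j)) * (tGen (gE i)))
| sl_ff i j : far i j -> sl_rel ((tGen (gF i)) * (tGen (gF j))) ((tGen (gF j)) * (tGen (gF i)))
| sl_ef i j : sl_rel ((tGen (gE i)) * (tGen (gF j)) - (tGen (gF j)) * (tGen (gE i)))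
    (if i == j then ((q - q^-1)^-1)%:T * ((tGen (gK i)) - (tGen (gKi i))) else 0%:T)
| sl_serre_e i j : adjacent i j ->
    sl_rel ((tGen (gE i)) * (tGen (gE i)) * (tGen (gE j)) - qint2%:T * (tGen (gE i)) * (tGen (gE j)) * (tGen (gE i))
            + (tGen (gE j)) * (tGen (gE i)) * (tGen (gE i))) (0%:T)
| sl_serre_f i j : adjacent i j ->
    sl_rel ((tGen (gF i)) * (tGen (gF i)) * (tGen (gF j)) - qint2%:T * (tGen (gF i)) * (tGen (gF j)) * (tGen (gF i))
            + (tGen (gF j)) * (tGen (gF i)) * (tGen (gF i))) (0%:T).

Definition Usl : pres Cx := Pres sl_rel.

Inductive sogen : Type := gI of idx.

Inductive so_rel : relation Cx sogen :=
(* a = I_{j,j-1}, b = I_{j-1,j-2} with i = index of b, j = i+1 *)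
| so_1 (i j : idx) : (i.+1 == j :> nat) ->
    so_rel ((tGen (gI j)) * (tGen (gI j)) * (tGen (gI i)) + (tGen (gI i)) * (tGen (gI j)) * (tGen (gI j))
            - qint2%:T * (tGen (gI j)) * (tGen (gI i)) * (tGen (gI j))) (tOpp ((tGen (gI i))))
| so_2 (i j : idx) : (i.+1 == j :> nat) ->
    so_rel ((tGen (gI i)) * (tGen (gI i)) * (tGen (gI j)) + (tGen (gI j)) * (tGen (gI i)) * (tGen (gI i))
            - qint2%:T * (tGen (gI i)) * (tGen (gI j)) * (tGen (gI i))) (tOpp ((tGen (gI j))))
| so_3 (i j : idx) : far i j -> so_rel ((tGen (gI i)) * (tGen (gI j))) ((tGen (gI j)) * (tGen (gI i))).

Definition Uso : pres Cx := Pres so_rel.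

Definition Delta (g : slgen) : term Cx (slgen + slgen) :=
  match g with
  | gE i => (tGen (inl (gE i))) * (tGen (inr (gKi i))) + (tGen (inr (gE i)))
  | gF i => (tGen (inl (gF i))) + (tGen (inl (gK i))) * (tGen (inr (gF i)))
  | gK i => (tGen (inl (gK i))) * (tGen (inr (gK i)))
  | gKi i => (tGen (inl (gKi i))) * (tGen (inr (gKi i)))
  end.

Definition eps (g : slgen) : Cx :=
  match g with gE _ | gF _ => 0 | gK _ | gKi _ => 1 end.

Definition Itilde (i : idx) : T := (tGen (gF i)) - (q^-1)%:T * (tGen (gK i)) * (tGen (gE i)).

Definition iota_so (g : sogen) : T := match g with gI i => Itilde i end.

Definition phi (g : sogen) : term Cx (slgen + sogen) :=
  match g with gI i =>
    subst (fun x => tGen (inl x)) (Itilde i) + (tGen (inl (gK i))) * (tGen (inr (gI i)))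
  end.

Definition Delta_id (g : slgen + sogen) : term Cx (slgen + (slgen + sogen)) :=
  match g with
  | inl x => subst (fun s => match s with
                             | inl a => tGen (inl a)
                             | inr b => tGen (inr (inl b)) end) (Delta x)
  | inr y => (tGen (inr (inr y)))
  end.

Definition id_phi (g : slgen + sogen) : term Cx (slgen + (slgen + sogen)) :=
  match g with
  | inl x => (tGen (inl x))
  | inr y => subst (fun s => tGen (inr s)) (phi y)
  end.

Definition eps_id (g : slgen + sogen) : term Cx sogen :=
  match g with
  | inl x => (eps x)%:T
  | inr y => tGen y
  end.

Definition id_iota (g : slgen + sogen) : term Cx (slgen + slgen) :=
  match g with
  | inl x => (tGen (inl x))
  | inr y => subst (fun s => tGen (inr s)) (iota_so y)
  end.

End Quantum.

(* Main.v *)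
Require Import Defs.
From Stdlib Require Import Setoid Morphisms PeanoNat.
From HB Require Import structures.
From mathcomp Require Import all_boot all_order all_algebra.
From mathcomp Require Import Rstruct complex.
From mathcomp Require Import ring zify.
Import GRing.Theory.
Set Implicit Arguments. Unset Strict Implicit.
Local Open Scope ring_scope.

Section Eqv.
Variables (K : fieldType) (X : Type) (r : Defs.relation K X).
Local Notation T := (term K X).
Local Notation "a ≡ b" := (eqv r a b) (at level 70).

Lemma eqv_Equiv : Equivalence (eqv r).
Proof. split; [exact: eqv_refl | exact: eqv_sym | exact: eqv_trans]. Qed.
End Eqv.

Add Parametric Relation (K : fieldType) (X : Type) (r : Defs.relation K X) : (term K X) (@eqv K X r)
  reflexivity proved by (@eqv_refl K X r)
  symmetry proved by (@eqv_sym K X r)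
  transitivity proved by (@eqv_trans K X r) as eqv_setoid.
Add Parametric Morphism (K : fieldType) (X : Type) (r : Defs.relation K X) : (@tAdd K X)
  with signature (@eqv K X r) ==> (@eqv K X r) ==> (@eqv K X r) as tAdd_mor.
Proof. by move=> *; apply: eqv_add. Qed.
Add Parametric Morphism (K : fieldType) (X : Type) (r : Defs.relation K X) : (@tMul K X)
  with signature (@eqv K X r) ==> (@eqv K X r) ==> (@eqv K X r) as tMul_mor.
Proof. by move=> *; apply: eqv_mul. Qed.

Global Hint Resolve eqv_refl : core.

Section Eqv2.
Variables (K : fieldType) (X : Type) (r : Defs.relation K X).
Local Notation T := (term K X).
Local Notation "a ≡ b" := (eqv r a b) (at level 70).
Implicit Types a b c : T.

Lemma eaddA a b c : tAdd (tAdd a b) c ≡ tAdd a (tAdd b c). Proof. exact: eqv_addA. Qed.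
Lemma eaddC a b : tAdd a b ≡ tAdd b a. Proof. exact: eqv_addC. Qed.
Lemma eadd0 a : tAdd (tC 0) a ≡ a. Proof. exact: eqv_add0. Qed.
Lemma eaddr0 a : tAdd a (tC 0) ≡ a. Proof. by rewrite eaddC eadd0. Qed.
Lemma eaddN a : tAdd a (tMul (tC (-1)) a) ≡ tC 0. Proof. exact: eqv_addN. Qed.
Lemma eNaddr a : tAdd (tMul (tC (-1)) a) a ≡ tC 0. Proof. by rewrite eaddC eaddN. Qed.
Lemma emulA a b c : tMul (tMul a b) c ≡ tMul a (tMul b c). Proof. exact: eqv_mulA. Qed.
Lemma emul1 a : tMul (tC 1) a ≡ a. Proof. exact: eqv_mul1l. Qed.
Lemma emulr1 a : tMul a (tC 1) ≡ a. Proof. exact: eqv_mul1r. Qed.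
Lemma emulDl a b c : tMul (tAdd a b) c ≡ tAdd (tMul a c) (tMul b c). Proof. exact: eqv_mulDl. Qed.
Lemma emulDr a b c : tMul a (tAdd b c) ≡ tAdd (tMul a b) (tMul a c). Proof. exact: eqv_mulDr. Qed.
Lemma Cadd (x y : K) : tAdd (tC x) (tC y) ≡ tC (x + y). Proof. exact: eqv_Cadd. Qed.
Lemma Cmul (x y : K) : tMul (tC x) (tC y) ≡ tC (x * y). Proof. exact: eqv_Cmul. Qed.
Lemma Ccomm (x : K) a : tMul (tC x) a ≡ tMul a (tC x). Proof. exact: eqv_Ccomm. Qed.

Lemma add_cancel a b : tAdd a b ≡ a -> b ≡ tC 0.
Proof.
move=> H.
have E : tAdd (tAdd a b) (tMul (tC (-1)) a) ≡ tC 0 by rewrite H eaddN.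
rewrite -E (eaddC a b) eaddA eaddN eaddr0. reflexivity.
Qed.

Lemma emul0 a : tMul (tC 0) a ≡ tC 0.
Proof.
apply: (@add_cancel (tMul (tC 0) a)).
by rewrite -emulDl Cadd GRing.addr0.
Qed.
Lemma emulr0 a : tMul a (tC 0) ≡ tC 0.
Proof. by rewrite -Ccomm emul0. Qed.
Lemma CCmul (x y : K) a : tMul (tC x) (tMul (tC y) a) ≡ tMul (tC (x * y)) a.
Proof. by rewrite -emulA Cmul. Qed.
Lemma CCadd (x y : K) a : tAdd (tMul (tC x) a) (tMul (tC y) a) ≡ tMul (tC (x + y)) a.
Proof. by rewrite -emulDl Cadd. Qed.
Lemma mulCr (x : K) a b : tMul a (tMul (tC x) b) ≡ tMul (tC x) (tMul a b).
Proof. by rewrite -emulA -Ccomm emulA. Qed.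
Lemma mulCl (x : K) a b : tMul (tMul (tC x) a) b ≡ tMul (tC x) (tMul a b).
Proof. exact: emulA. Qed.
Lemma eqC (x y : K) : x = y -> tC x ≡ tC y.
Proof. by move=> ->. Qed.
Lemma sub0_eq a b : tAdd a (tMul (tC (-1)) b) ≡ tC 0 -> a ≡ b.
Proof.
move=> H. rewrite -[b]eadd0 -H eaddA eNaddr eaddr0. reflexivity.
Qed.
Lemma eq_sub0 a b : a ≡ b -> tAdd a (tMul (tC (-1)) b) ≡ tC 0.
Proof. by move=> ->; rewrite eaddN. Qed.
End Eqv2.


Section Norm.
Variables (K : fieldType) (X : Type) (r : Defs.relation K X) (emb : nat -> term K X).
Local Notation T := (term K X).
Local Notation "a ≡ b" := (eqv r a b) (at level 70).

Definition word := list nat.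
Definition mono := (K * word)%type.
Definition poly := list mono.

Fixpoint Wi (w : word) : T :=
  match w with nil => tC 1 | cons a w' => tMul (emb a) (Wi w') end.
Definition Mi (m : mono) : T := tMul (tC m.1) (Wi m.2).
Fixpoint Pi (p : poly) : T :=
  match p with nil => tC 0 | cons m p' => tAdd (Mi m) (Pi p') end.

Definition mmulm (m1 m2 : mono) : mono := (m1.1 * m2.1, m1.2 ++ m2.2).
Fixpoint ppmul (p1 p2 : poly) : poly :=
  match p1 with nil => nil | cons m p1' => map (mmulm m) p2 ++ ppmul p1' p2 end.

Fixpoint toP (t : term K nat) : poly :=
  match t with
  | tGen a => [:: (1, [:: a])]
  | tC c => [:: (c, nil)]
  | tAdd a b => toP a ++ toP b
  | tMul a b => ppmul (toP a) (toP b)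
  end.

Lemma Wi_cat u v : Wi (u ++ v) ≡ tMul (Wi u) (Wi v).
Proof.
elim: u => [|a u IH] /=; first by rewrite emul1.
by rewrite IH emulA.
Qed.

Lemma Pi_cat p p' : Pi (p ++ p') ≡ tAdd (Pi p) (Pi p').
Proof.
elim: p => [|m p IH] /=; first by rewrite eadd0.
by rewrite IH eaddA.
Qed.

Lemma Mi_mul m1 m2 : Mi (mmulm m1 m2) ≡ tMul (Mi m1) (Mi m2).
Proof.
case: m1 m2 => [c1 w1] [c2 w2]; rewrite /Mi /mmulm /=.
by rewrite Wi_cat emulA mulCr CCmul.
Qed.

Lemma Pi_map_mulm m p : Pi (map (mmulm m) p) ≡ tMul (Mi m) (Pi p).
Proof.
elim: p => [|m2 p IH] /=; first by rewrite emulr0.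
by rewrite IH Mi_mul emulDr.
Qed.

Lemma Pi_pmul p1 p2 : Pi (ppmul p1 p2) ≡ tMul (Pi p1) (Pi p2).
Proof.
elim: p1 => [|m p IH] /=; first by rewrite emul0.
by rewrite Pi_cat Pi_map_mulm IH emulDl.
Qed.

Lemma toP_sound t : subst emb t ≡ Pi (toP t).
Proof.
elim: t => [a|c|a IHa b IHb|a IHa b IHb]; rewrite /= ?/Mi /=.
- by rewrite emulr1 eaddr0 emul1.
- by rewrite eaddr0 emulr1.
- by rewrite Pi_cat IHa IHb.
- by rewrite Pi_pmul IHa IHb.
Qed.

Definition pnegp (p : poly) : poly := map (fun m => (- m.1, m.2)) p.
Lemma Pi_negp p : Pi (pnegp p) ≡ tMul (tC (-1)) (Pi p).
Proof.
elim: p => [|[c w] p IH] /=; first by rewrite emulr0.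
rewrite IH emulDr /Mi /= CCmul mulN1r. reflexivity.
Qed.

Fixpoint wprefix (l w : word) : option word :=
  match l, w with
  | nil, _ => Some w
  | cons a l', cons b w' => if Nat.eqb a b then wprefix l' w' else None
  | cons _ _, nil => None
  end.
Fixpoint wfind (l w : word) : option (word * word) :=
  match wprefix l w with
  | Some v => Some (nil, v)
  | None => match w with
            | nil => None
            | cons b w' => match wfind l w' with
                           | Some (u, v) => Some (cons b u, v)
                           | None => None end end end.

Lemma wprefix_ok l w v : wprefix l w = Some v -> w = l ++ v.
Proof.
elim: l w => [|a l IH] w /=; first by case=> ->.
case: w => [|b w] //.
case: (Nat.eqb_spec a b) => // -> /IH ->. by [].
Qed.

Lemma wfind_ok l w u v : wfind l w = Some (u, v) -> w = u ++ l ++ v.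
Proof.
elim: w u v => [|b w IH] u v /=.
  by case E: (wprefix l nil) => [v'|] // [<- <-]; rewrite /= -(wprefix_ok E).
case E: (wprefix l (b :: w)) => [v'|]; first by case=> <- <-; rewrite /= -(wprefix_ok E).
case F: (wfind l w) => [[u' v']|] // [<- <-].
by rewrite (IH _ _ F).
Qed.

Definition rule := (word * poly)%type.
Fixpoint rules_ok (rs : list rule) : Prop :=
  match rs with nil => True | cons rl rs' => Wi rl.1 ≡ Pi rl.2 /\ rules_ok rs' end.

Definition winst (c : K) (u v : word) (m : mono) : mono := (c * m.1, u ++ m.2 ++ v).

Fixpoint rw_mono (rs : list rule) (c : K) (w : word) : option poly :=
  match rs with
  | nil => None
  | cons (l, rhs) rs' =>
      match wfind l w with
      | Some (u, v) => Some (map (winst c u v) rhs)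
      | None => rw_mono rs' c w end end.

Lemma Pi_inst c u v rhs :
  Pi (map (winst c u v) rhs) ≡ tMul (tC c) (tMul (Wi u) (tMul (Pi rhs) (Wi v))).
Proof.
elim: rhs => [|[c' w'] rhs IH] /=.
  by rewrite emul0 emulr0 emulr0.
rewrite IH /Mi /= !emulDl !emulDr; apply: eqv_add => //.
rewrite !Wi_cat !emulA mulCr mulCr CCmul [c' * c]mulrC. reflexivity.
Qed.

Lemma rw_mono_ok rs c w p : rules_ok rs -> rw_mono rs c w = Some p -> Mi (c, w) ≡ Pi p.
Proof.
elim: rs => [|[l rhs] rs IH] //= [Hl Hrs].
case F: (wfind l w) => [[u v]|]; last exact: IH.
case=> <-; rewrite Pi_inst /Mi /= (wfind_ok F) !Wi_cat Hl. reflexivity.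
Qed.

Fixpoint nstep (rs : list rule) (p : poly) : poly :=
  match p with
  | nil => nil
  | cons (c, w) p' =>
      match rw_mono rs c w with
      | Some q => q ++ nstep rs p'
      | None => (c, w) :: nstep rs p' end end.

Fixpoint iter_nstep (k : nat) (rs : list rule) (p : poly) : poly :=
  match k with O => p | S k' => iter_nstep k' rs (nstep rs p) end.

Lemma nstep_ok rs p : rules_ok rs -> Pi (nstep rs p) ≡ Pi p.
Proof.
move=> Hrs; elim: p => [|[c w] p IH] //=.
case E: (rw_mono rs c w) => [q|] /=; last by rewrite IH.
by rewrite Pi_cat IH (rw_mono_ok Hrs E).
Qed.

Lemma iter_ok k rs p : rules_ok rs -> Pi (iter_nstep k rs p) ≡ Pi p.
Proof. by move=> Hrs; elim: k p => [|k IH] p //=; rewrite IH nstep_ok. Qed.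

Fixpoint eqw (u v : word) : bool :=
  match u, v with
  | nil, nil => true
  | cons a u', cons b v' => Nat.eqb a b && eqw u' v'
  | _, _ => false end.
Lemma eqwP u v : eqw u v -> u = v.
Proof.
elim: u v => [|a u IH] [|b v] //= /andP [/Nat.eqb_spec -> /IH ->]. by [].
Qed.
Lemma eqw_refl u : eqw u u.
Proof. by elim: u => //= a u ->; rewrite Nat.eqb_refl. Qed.

Fixpoint wcoef (w : word) (p : poly) : K :=
  match p with
  | nil => 0
  | cons (c, w') p' => if eqw w w' then c + wcoef w p' else wcoef w p' end.

Fixpoint wrmw (w : word) (p : poly) : poly :=
  match p with
  | nil => nil
  | cons (c, w') p' => if eqw w w' then wrmw w p' else (c, w') :: wrmw w p' end.

Lemma split_w w p : Pi p ≡ tAdd (tMul (tC (wcoef w p)) (Wi w)) (Pi (wrmw w p)).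
Proof.
elim: p => [|[c w'] p IH] /=; first by rewrite emul0 eaddr0.
case E: (eqw w w'); rewrite IH /Mi /=.
  by rewrite (eqwP E) -eaddA CCadd.
rewrite -!eaddA (eaddC _ (tMul (tC c) _)). by [].
Qed.

Fixpoint zchk (k : nat) (p : poly) : Prop :=
  match p with
  | nil => True
  | cons (c, w) p' =>
      match k with
      | O => False
      | S k' => wcoef w p = 0 /\ zchk k' (wrmw w p') end end.

Lemma zchk_ok k p : zchk k p -> Pi p ≡ tC 0.
Proof.
elim: k p => [|k IH] [|[c w] p] // [H0 H].
have S := split_w w ((c, w) :: p).
rewrite H0 emul0 eadd0 /= eqw_refl in S.
rewrite /= in S. change (Pi ((c, w) :: p) ≡ tC 0). rewrite /= S. exact: IH.
Qed.

Definition NF (k : nat) (rs : list rule) (t1 t2 : term K nat) : poly :=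
  iter_nstep k rs (toP t1 ++ pnegp (toP t2)).

Lemma norm_eq k rs t1 t2 :
  rules_ok rs -> zchk 4000 (NF k rs t1 t2) -> subst emb t1 ≡ subst emb t2.
Proof.
move=> Hrs /zchk_ok; rewrite /NF iter_ok // Pi_cat Pi_negp -!toP_sound.
exact: sub0_eq.
Qed.

(* derive using a hypothesis u*X*v = u*Y*v *)
Lemma norm_combo k rs t1 t2 u v x y :
  rules_ok rs -> subst emb x ≡ subst emb y ->
  zchk 4000 (iter_nstep k rs (toP t1 ++ pnegp (toP t2) ++
           pnegp (toP (tMul (tMul u x) v)) ++ toP (tMul (tMul u y) v))) ->
  subst emb t1 ≡ subst emb t2.
Proof.
move=> Hrs Hxy /zchk_ok; rewrite iter_ok // !Pi_cat !Pi_negp -!toP_sound /= Hxy.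
rewrite eNaddr eaddr0 => H; exact: sub0_eq.
Qed.
End Norm.


Ltac zcomp := cbv [zchk NF iter_nstep nstep rw_mono wfind wprefix toP ppmul mmulm pnegp
  List.map map cat wcoef wrmw eqw Nat.eqb winst fst snd andb rules_ok qint2 tSub tOpp].
Ltac sidec := repeat (apply/andP; split); try assumption; try exact: oner_neq0.
Ltac zsolve := zcomp; repeat match goal with
  | |- _ /\ _ => split
  | |- True => exact I
  | |- _ = _ => field; try done; sidec
  end.
Ltac rclean := rewrite /= ?/Mi /= ?emulr1 ?eaddr0 ?emul1.

Definition embL (Y : Type) (l : seq (term Cx Y)) (k : nat) : term Cx Y := nth (tC 0) l k.

Section SL.
Variables (q : Cx) (n : nat) (Y : Type) (R : Defs.relation Cx Y) (g : slgen n -> term Cx Y).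
Hypothesis Hsl : forall a b, sl_rel q a b -> eqv R (subst g a) (subst g b).
Hypothesis Hq : q != 0.
Hypothesis Hq2 : q * q - 1 != 0.
Local Notation "a ≡ b" := (eqv R a b) (at level 70).
Local Notation E i := (g (gE i)).
Local Notation F i := (g (gF i)).
Local Notation Kk i := (g (gK i)).
Local Notation Ki i := (g (gKi i)).
Local Notation G k := (tGen k%N).
Local Notation "a ** b" := (tMul a b) (at level 40, left associativity).

Lemma L_kki i : Kk i ** Ki i ≡ tC 1.
Proof. exact: (Hsl (sl_kki q i)). Qed.
Lemma L_kik i : Ki i ** Kk i ≡ tC 1.
Proof. exact: (Hsl (sl_kik q i)). Qed.
Lemma L_kk i j : Kk i ** Kk j ≡ Kk j ** Kk i.
Proof. exact: (Hsl (sl_kk q i j)). Qed.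

Lemma L_kKi i j : Kk i ** Ki j ≡ Ki j ** Kk i.
Proof.
pose emb := embL [:: Kk i; Ki i; Kk j; Ki j].
have rok : rules_ok R emb [:: ([:: 3; 2]%N, [:: (1, [::])]); ([:: 2; 3]%N, [:: (1, [::])])].
  split; [|split=> //]; rclean; [exact: L_kik | exact: L_kki].
refine (norm_combo (emb := emb) (k:=5) (t1 := G 0 ** G 3) (t2 := G 3 ** G 0)
   (u := G 3) (v := G 3) (x := G 2 ** G 0) (y := G 0 ** G 2) rok (L_kk _ _) _).
zsolve.
Qed.

Lemma L_kiki i j : Ki i ** Ki j ≡ Ki j ** Ki i.
Proof.
pose emb := embL [:: Kk i; Ki i; Kk j; Ki j].
have rok : rules_ok R emb [:: ([:: 1; 0]%N, [:: (1, [::])]); ([:: 0; 1]%N, [:: (1, [::])]);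
                               ([:: 3; 2]%N, [:: (1, [::])]); ([:: 2; 3]%N, [:: (1, [::])])].
  do 4 (split; [rclean; first [exact: L_kik | exact: L_kki]|]); done.
refine (norm_combo (emb := emb) (k:=8) (t1 := G 1 ** G 3) (t2 := G 3 ** G 1)
   (u := G 3 ** G 1) (v := G 1 ** G 3) (x := G 0 ** G 2) (y := G 2 ** G 0) rok (L_kk _ _) _).
zsolve.
Qed.

Section C.
Variables (i j : 'I_n.-1) (c : Cx).
Hypothesis Hc0 : c != 0.

Lemma L_ke (Hc : q ^ cartan i j = c) : Kk i ** E j ≡ tC c ** (E j ** Kk i).
Proof.
pose emb := embL [:: Kk i; Ki i; E j].
have rok : rules_ok R emb [:: ([:: 1; 0]%N, [:: (1, [::])])].
  split=> //; rclean; exact: L_kik.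
have H := Hsl (sl_ke q i j); rewrite Hc in H.
refine (norm_combo (emb := emb) (k:=5) (t1 := G 0 ** G 2) (t2 := tC c ** (G 2 ** G 0))
   (u := tC 1) (v := G 0) (x := G 0 ** G 2 ** G 1) (y := tC c ** G 2) rok H _).
zsolve.
Qed.

Lemma L_ek (Hc : q ^ cartan i j = c) : E j ** Kk i ≡ tC c^-1 ** (Kk i ** E j).
Proof.
pose emb := embL [:: Kk i; Ki i; E j].
refine (norm_combo (emb := emb) (k:=1) (rs := [::]) (t1 := G 2 ** G 0) (t2 := tC c^-1 ** (G 0 ** G 2))
   (u := tC (- c^-1)) (v := tC 1) (x := G 0 ** G 2) (y := tC c ** (G 2 ** G 0)) _ (L_ke Hc) _).
  done.
zsolve.
Qed.

Lemma L_eki (Hc : q ^ cartan i j = c) : E j ** Ki i ≡ tC c ** (Ki i ** E j).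
Proof.
pose emb := embL [:: Kk i; Ki i; E j].
have rok : rules_ok R emb [:: ([:: 1; 0]%N, [:: (1, [::])]); ([:: 0; 1]%N, [:: (1, [::])])].
  do 2 (split; [rclean; first [exact: L_kik | exact: L_kki]|]); done.
refine (norm_combo (emb := emb) (k:=5) (t1 := G 2 ** G 1) (t2 := tC c ** (G 1 ** G 2))
   (u := G 1) (v := G 1) (x := G 0 ** G 2) (y := tC c ** (G 2 ** G 0)) rok (L_ke Hc) _).
zsolve.
Qed.

Lemma L_kf (Hc : q ^ (- cartan i j) = c) : Kk i ** F j ≡ tC c ** (F j ** Kk i).
Proof.
pose emb := embL [:: Kk i; Ki i; F j].
have rok : rules_ok R emb [:: ([:: 1; 0]%N, [:: (1, [::])])].
  split=> //; rclean; exact: L_kik.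
have H := Hsl (sl_kf q i j); rewrite Hc in H.
refine (norm_combo (emb := emb) (k:=5) (t1 := G 0 ** G 2) (t2 := tC c ** (G 2 ** G 0))
   (u := tC 1) (v := G 0) (x := G 0 ** G 2 ** G 1) (y := tC c ** G 2) rok H _).
zsolve.
Qed.

Lemma L_kif (Hc : q ^ (- cartan i j) = c) : Ki i ** F j ≡ tC c^-1 ** (F j ** Ki i).
Proof.
pose emb := embL [:: Kk i; Ki i; F j].
have rok : rules_ok R emb [:: ([:: 1; 0]%N, [:: (1, [::])]); ([:: 0; 1]%N, [:: (1, [::])])].
  do 2 (split; [rclean; first [exact: L_kik | exact: L_kki]|]); done.
refine (norm_combo (emb := emb) (k:=5) (t1 := G 1 ** G 2) (t2 := tC c^-1 ** (G 2 ** G 1))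
   (u := tC (- c^-1) ** G 1) (v := G 1) (x := G 0 ** G 2) (y := tC c ** (G 2 ** G 0)) rok (L_kf Hc) _).
zsolve.
Qed.
End C.

Definition dq := (q - q^-1)^-1.

Lemma L_efeq i : E i ** F i ≡ tAdd (F i ** E i) (tAdd (tC dq ** Kk i) (tC (- dq) ** Ki i)).
Proof.
pose emb := embL [:: E i; F i; Kk i; Ki i].
have H := Hsl (sl_ef q i i); rewrite eqxx in H.
refine (norm_combo (emb := emb) (k:=1) (rs := [::]) (t1 := G 0 ** G 1)
   (t2 := tAdd (G 1 ** G 0) (tAdd (tC dq ** G 2) (tC (- dq) ** G 3)))
   (u := tC 1) (v := tC 1) (x := tSub (G 0 ** G 1) (G 1 ** G 0)) (y := tC dq ** tSub (G 2) (G 3)) _ H _).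
  done.
rewrite /dq; zsolve.
Qed.

Lemma L_efneq i j : i != j -> E i ** F j ≡ F j ** E i.
Proof.
move=> Hij.
pose emb := embL [:: E i; F j].
have H := Hsl (sl_ef q i j); rewrite (negbTE Hij) in H.
refine (norm_combo (emb := emb) (k:=1) (rs := [::]) (t1 := G 0 ** G 1)
   (t2 := G 1 ** G 0)
   (u := tC 1) (v := tC 1) (x := tSub (G 0 ** G 1) (G 1 ** G 0)) (y := tC 0) _ H _).
  done.
zsolve.
Qed.

Lemma L_serre_e i j : adjacent i j ->
  E j ** (E i ** E i) ≡ tAdd (tC (qint2 q) ** (E i ** (E j ** E i))) (tC (-1) ** (E i ** (E i ** E j))).
Proof.
move=> Hij.
pose emb := embL [:: E i; E j].
have H := Hsl (sl_serre_e q Hij).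
refine (norm_combo (emb := emb) (k:=1) (rs := [::]) (t1 := G 1 ** (G 0 ** G 0))
   (t2 := tAdd (tC (qint2 q) ** (G 0 ** (G 1 ** G 0))) (tC (-1) ** (G 0 ** (G 0 ** G 1))))
   (u := tC 1) (v := tC 1)
   (x := tAdd (tSub (G 0 ** G 0 ** G 1) (tC (qint2 q) ** G 0 ** G 1 ** G 0)) (G 1 ** G 0 ** G 0))
   (y := tC 0) _ H _).
  done.
zsolve.
Qed.

Lemma L_serre_f i j : adjacent i j ->
  F j ** (F i ** F i) ≡ tAdd (tC (qint2 q) ** (F i ** (F j ** F i))) (tC (-1) ** (F i ** (F i ** F j))).
Proof.
move=> Hij.
pose emb := embL [:: F i; F j].
have H := Hsl (sl_serre_f q Hij).
refine (norm_combo (emb := emb) (k:=1) (rs := [::]) (t1 := G 1 ** (G 0 ** G 0))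
   (t2 := tAdd (tC (qint2 q) ** (G 0 ** (G 1 ** G 0))) (tC (-1) ** (G 0 ** (G 0 ** G 1))))
   (u := tC 1) (v := tC 1)
   (x := tAdd (tSub (G 0 ** G 0 ** G 1) (tC (qint2 q) ** G 0 ** G 1 ** G 0)) (G 1 ** G 0 ** G 0))
   (y := tC 0) _ H _).
  done.
zsolve.
Qed.

Lemma L_serre_e' i j : adjacent i j ->
  E i ** (E i ** E j) ≡ tAdd (tC (qint2 q) ** (E i ** (E j ** E i))) (tC (-1) ** (E j ** (E i ** E i))).
Proof.
move=> Hij.
pose emb := embL [:: E i; E j].
have H := Hsl (sl_serre_e q Hij).
refine (norm_combo (emb := emb) (k:=1) (rs := [::]) (t1 := G 0 ** (G 0 ** G 1))
   (t2 := tAdd (tC (qint2 q) ** (G 0 ** (G 1 ** G 0))) (tC (-1) ** (G 1 ** (G 0 ** G 0))))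
   (u := tC 1) (v := tC 1)
   (x := tAdd (tSub (G 0 ** G 0 ** G 1) (tC (qint2 q) ** G 0 ** G 1 ** G 0)) (G 1 ** G 0 ** G 0))
   (y := tC 0) _ H _).
  done.
zsolve.
Qed.

Lemma L_serre_f' i j : adjacent i j ->
  F i ** (F i ** F j) ≡ tAdd (tC (qint2 q) ** (F i ** (F j ** F i))) (tC (-1) ** (F j ** (F i ** F i))).
Proof.
move=> Hij.
pose emb := embL [:: F i; F j].
have H := Hsl (sl_serre_f q Hij).
refine (norm_combo (emb := emb) (k:=1) (rs := [::]) (t1 := G 0 ** (G 0 ** G 1))
   (t2 := tAdd (tC (qint2 q) ** (G 0 ** (G 1 ** G 0))) (tC (-1) ** (G 1 ** (G 0 ** G 0))))
   (u := tC 1) (v := tC 1)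
   (x := tAdd (tSub (G 0 ** G 0 ** G 1) (tC (qint2 q) ** G 0 ** G 1 ** G 0)) (G 1 ** G 0 ** G 0))
   (y := tC 0) _ H _).
  done.
zsolve.
Qed.

Lemma L_ee i j : far i j -> E i ** E j ≡ E j ** E i.
Proof. move=> H; exact: (Hsl (sl_ee q H)). Qed.
Lemma L_ff i j : far i j -> F i ** F j ≡ F j ** F i.
Proof. move=> H; exact: (Hsl (sl_ff q H)). Qed.
End SL.


Lemma hom_lift (K : fieldType) (X Y : Type) (r1 : Defs.relation K X) (r2 : Defs.relation K Y)
  (f : X -> term K Y) :
  (forall a b, r1 a b -> eqv r2 (subst f a) (subst f b)) ->
  forall a b, eqv r1 a b -> eqv r2 (subst f a) (subst f b).
Proof.
move=> Hf a b; elim=> /=.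
- by move=> *; apply: Hf.
- by move=> *; apply: eqv_refl.
- by move=> *; apply: eqv_sym.
- by move=> *; apply: eqv_trans; eauto.
- by move=> *; apply: eqv_add.
- by move=> *; apply: eqv_mul.
all: by move=> *; constructor.
Qed.

Lemma subst_subst (K : fieldType) (X Y Z : Type) (f : Y -> term K Z) (g : X -> term K Y) t :
  subst f (subst g t) = subst (fun x => subst f (g x)) t.
Proof. by elim: t => //= a -> b ->. Qed.

Lemma subst_ext (K : fieldType) (X Y : Type) (f g : X -> term K Y) t :
  (forall x, f x = g x) -> subst f t = subst g t.
Proof. by move=> H; elim: t => //= [a -> b ->|a -> b ->]. Qed.

Lemma adj_sym n (i j : 'I_n.-1) : adjacent i j = adjacent j i.
Proof. by rewrite /adjacent orbC. Qed.
Lemma far_sym n (i j : 'I_n.-1) : far i j = far j i.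
Proof. by rewrite /far orbC. Qed.
Lemma cartan_same n (i : 'I_n.-1) : cartan i i = 2%:Z.
Proof. by rewrite /cartan eqxx. Qed.
Lemma adj_neq n (i j : 'I_n.-1) : adjacent i j -> i != j.
Proof.
rewrite /adjacent => H; apply/eqP => E; subst j.
by case/orP: H => /eqP; lia.
Qed.
Lemma far_neq n (i j : 'I_n.-1) : far i j -> i != j.
Proof.
rewrite /far => H; apply/eqP => E; subst j.
by case/orP: H => /ltP; lia.
Qed.
Lemma far_nadj n (i j : 'I_n.-1) : far i j -> adjacent i j = false.
Proof.
rewrite /far /adjacent => H; apply/negbTE/negP => /orP [] /eqP E;
by case/orP: H => /ltP; lia.
Qed.
Lemma cartan_adj n (i j : 'I_n.-1) : adjacent i j -> cartan i j = (-1)%:~R.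
Proof. by move=> H; rewrite /cartan (negbTE (adj_neq H)) H. Qed.
Lemma cartan_far n (i j : 'I_n.-1) : far i j -> cartan i j = 0.
Proof. by move=> H; rewrite /cartan (negbTE (far_neq H)) far_nadj. Qed.


Local Notation G k := (tGen k%N).
Local Notation "a ** b" := (tMul a b) (at level 40, left associativity).
Local Notation "a `+ b" := (tAdd a b) (at level 50, left associativity).
Local Notation "a `- b" := (tSub a b) (at level 50, left associativity).
Definition rules_adj (q : Cx) : seq (rule Cx) :=
  [:: ([:: 2; 3]%N, [:: (1, [::])]);
  ([:: 3; 2]%N, [:: (1, [::])]);
  ([:: 4; 5]%N, [:: (1, [::])]);
  ([:: 5; 4]%N, [:: (1, [::])]);
  ([:: 4; 2]%N, [:: (1, [:: 2; 4]%N)]);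
  ([:: 4; 3]%N, [:: (1, [:: 3; 4]%N)]);
  ([:: 5; 2]%N, [:: (1, [:: 2; 5]%N)]);
  ([:: 5; 3]%N, [:: (1, [:: 3; 5]%N)]);
  ([:: 6; 2]%N, [:: (((q * q))^-1, [:: 2; 6]%N)]);
  ([:: 6; 3]%N, [:: ((q * q), [:: 3; 6]%N)]);
  ([:: 2; 0]%N, [:: ((q * q)^-1, [:: 0; 2]%N)]);
  ([:: 3; 0]%N, [:: (((q * q)^-1)^-1, [:: 0; 3]%N)]);
  ([:: 6; 0]%N, [:: (1, [:: 0; 6]%N); (dq q, [:: 2]%N); (- dq q, [:: 3]%N)]);
  ([:: 6; 4]%N, [:: ((q^-1)^-1, [:: 4; 6]%N)]);
  ([:: 6; 5]%N, [:: (q^-1, [:: 5; 6]%N)]);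
  ([:: 4; 0]%N, [:: (q, [:: 0; 4]%N)]);
  ([:: 5; 0]%N, [:: ((q)^-1, [:: 0; 5]%N)]);
  ([:: 6; 1]%N, [:: (1, [:: 1; 6]%N)]);
  ([:: 7; 2]%N, [:: ((q^-1)^-1, [:: 2; 7]%N)]);
  ([:: 7; 3]%N, [:: (q^-1, [:: 3; 7]%N)]);
  ([:: 2; 1]%N, [:: (q, [:: 1; 2]%N)]);
  ([:: 3; 1]%N, [:: ((q)^-1, [:: 1; 3]%N)]);
  ([:: 7; 0]%N, [:: (1, [:: 0; 7]%N)]);
  ([:: 7; 4]%N, [:: (((q * q))^-1, [:: 4; 7]%N)]);
  ([:: 7; 5]%N, [:: ((q * q), [:: 5; 7]%N)]);
  ([:: 4; 1]%N, [:: ((q * q)^-1, [:: 1; 4]%N)]);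
  ([:: 5; 1]%N, [:: (((q * q)^-1)^-1, [:: 1; 5]%N)]);
  ([:: 7; 1]%N, [:: (1, [:: 1; 7]%N); (dq q, [:: 4]%N); (- dq q, [:: 5]%N)]);
  ([:: 7; 6; 6]%N, [:: (qint2 q, [:: 6; 7; 6]%N); (-1, [:: 6; 6; 7]%N)]);
  ([:: 7; 7; 6]%N, [:: (qint2 q, [:: 7; 6; 7]%N); (-1, [:: 6; 7; 7]%N)]);
  ([:: 1; 0; 0]%N, [:: (qint2 q, [:: 0; 1; 0]%N); (-1, [:: 0; 0; 1]%N)]);
  ([:: 1; 1; 0]%N, [:: (qint2 q, [:: 1; 0; 1]%N); (-1, [:: 0; 1; 1]%N)]);
  ([:: 9; 8; 8]%N, [:: (qint2 q, [:: 8; 9; 8]%N); (-1, [:: 8; 8; 9]%N); (-1, [:: 9]%N)]);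
  ([:: 9; 9; 8]%N, [:: (qint2 q, [:: 9; 8; 9]%N); (-1, [:: 8; 9; 9]%N); (-1, [:: 8]%N)]);
  ([:: 8; 0]%N, [:: (1, [:: 0; 8]%N)]);
  ([:: 8; 1]%N, [:: (1, [:: 1; 8]%N)]);
  ([:: 8; 2]%N, [:: (1, [:: 2; 8]%N)]);
  ([:: 8; 3]%N, [:: (1, [:: 3; 8]%N)]);
  ([:: 8; 4]%N, [:: (1, [:: 4; 8]%N)]);
  ([:: 8; 5]%N, [:: (1, [:: 5; 8]%N)]);
  ([:: 8; 6]%N, [:: (1, [:: 6; 8]%N)]);
  ([:: 8; 7]%N, [:: (1, [:: 7; 8]%N)]);
  ([:: 9; 0]%N, [:: (1, [:: 0; 9]%N)]);
  ([:: 9; 1]%N, [:: (1, [:: 1; 9]%N)]);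
  ([:: 9; 2]%N, [:: (1, [:: 2; 9]%N)]);
  ([:: 9; 3]%N, [:: (1, [:: 3; 9]%N)]);
  ([:: 9; 4]%N, [:: (1, [:: 4; 9]%N)]);
  ([:: 9; 5]%N, [:: (1, [:: 5; 9]%N)]);
  ([:: 9; 6]%N, [:: (1, [:: 6; 9]%N)]);
  ([:: 9; 7]%N, [:: (1, [:: 7; 9]%N)])].

Definition rules_far (q : Cx) : seq (rule Cx) :=
  [:: ([:: 2; 3]%N, [:: (1, [::])]);
  ([:: 3; 2]%N, [:: (1, [::])]);
  ([:: 4; 5]%N, [:: (1, [::])]);
  ([:: 5; 4]%N, [:: (1, [::])]);
  ([:: 4; 2]%N, [:: (1, [:: 2; 4]%N)]);
  ([:: 4; 3]%N, [:: (1, [:: 3; 4]%N)]);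
  ([:: 5; 2]%N, [:: (1, [:: 2; 5]%N)]);
  ([:: 5; 3]%N, [:: (1, [:: 3; 5]%N)]);
  ([:: 6; 2]%N, [:: (((q * q))^-1, [:: 2; 6]%N)]);
  ([:: 6; 3]%N, [:: ((q * q), [:: 3; 6]%N)]);
  ([:: 2; 0]%N, [:: ((q * q)^-1, [:: 0; 2]%N)]);
  ([:: 3; 0]%N, [:: (((q * q)^-1)^-1, [:: 0; 3]%N)]);
  ([:: 6; 0]%N, [:: (1, [:: 0; 6]%N); (dq q, [:: 2]%N); (- dq q, [:: 3]%N)]);
  ([:: 6; 4]%N, [:: ((1)^-1, [:: 4; 6]%N)]);
  ([:: 6; 5]%N, [:: (1, [:: 5; 6]%N)]);
  ([:: 4; 0]%N, [:: (1, [:: 0; 4]%N)]);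
  ([:: 5; 0]%N, [:: ((1)^-1, [:: 0; 5]%N)]);
  ([:: 6; 1]%N, [:: (1, [:: 1; 6]%N)]);
  ([:: 7; 2]%N, [:: ((1)^-1, [:: 2; 7]%N)]);
  ([:: 7; 3]%N, [:: (1, [:: 3; 7]%N)]);
  ([:: 2; 1]%N, [:: (1, [:: 1; 2]%N)]);
  ([:: 3; 1]%N, [:: ((1)^-1, [:: 1; 3]%N)]);
  ([:: 7; 0]%N, [:: (1, [:: 0; 7]%N)]);
  ([:: 7; 4]%N, [:: (((q * q))^-1, [:: 4; 7]%N)]);
  ([:: 7; 5]%N, [:: ((q * q), [:: 5; 7]%N)]);
  ([:: 4; 1]%N, [:: ((q * q)^-1, [:: 1; 4]%N)]);
  ([:: 5; 1]%N, [:: (((q * q)^-1)^-1, [:: 1; 5]%N)]);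
  ([:: 7; 1]%N, [:: (1, [:: 1; 7]%N); (dq q, [:: 4]%N); (- dq q, [:: 5]%N)]);
  ([:: 7; 6]%N, [:: (1, [:: 6; 7]%N)]);
  ([:: 1; 0]%N, [:: (1, [:: 0; 1]%N)]);
  ([:: 9; 8]%N, [:: (1, [:: 8; 9]%N)]);
  ([:: 8; 0]%N, [:: (1, [:: 0; 8]%N)]);
  ([:: 8; 1]%N, [:: (1, [:: 1; 8]%N)]);
  ([:: 8; 2]%N, [:: (1, [:: 2; 8]%N)]);
  ([:: 8; 3]%N, [:: (1, [:: 3; 8]%N)]);
  ([:: 8; 4]%N, [:: (1, [:: 4; 8]%N)]);
  ([:: 8; 5]%N, [:: (1, [:: 5; 8]%N)]);
  ([:: 8; 6]%N, [:: (1, [:: 6; 8]%N)]);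
  ([:: 8; 7]%N, [:: (1, [:: 7; 8]%N)]);
  ([:: 9; 0]%N, [:: (1, [:: 0; 9]%N)]);
  ([:: 9; 1]%N, [:: (1, [:: 1; 9]%N)]);
  ([:: 9; 2]%N, [:: (1, [:: 2; 9]%N)]);
  ([:: 9; 3]%N, [:: (1, [:: 3; 9]%N)]);
  ([:: 9; 4]%N, [:: (1, [:: 4; 9]%N)]);
  ([:: 9; 5]%N, [:: (1, [:: 5; 9]%N)]);
  ([:: 9; 6]%N, [:: (1, [:: 6; 9]%N)]);
  ([:: 9; 7]%N, [:: (1, [:: 7; 9]%N)])].

Ltac RL Hsl := first [
    solve [apply: (L_kki Hsl)] | solve [apply: (L_kik Hsl)] | solve [apply: (L_kk Hsl)]
  | solve [apply: (L_kKi Hsl)] | solve [apply: eqv_sym; apply: (L_kKi Hsl)]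
  | solve [apply: (L_kiki Hsl)]
  | solve [apply: (L_ek Hsl); assumption] | solve [apply: (L_eki Hsl); assumption]
  | solve [apply: (L_kf Hsl); assumption] | solve [apply: (L_kif Hsl); assumption]
  | solve [apply: (L_efeq Hsl); assumption] | solve [apply: (L_efneq Hsl); assumption]
  | solve [apply: (L_serre_e Hsl); assumption] | solve [apply: (L_serre_e' Hsl); assumption]
  | solve [apply: (L_serre_f Hsl); assumption] | solve [apply: (L_serre_f' Hsl); assumption]
  | solve [apply: (L_ee Hsl); assumption] | solve [apply: (L_ff Hsl); assumption]
  | solve [apply: eqv_trans; last apply: emul1; first [apply: (L_eki Hsl) | apply: (L_kf Hsl)]; assumption]
  | assumption ].

Section P1.
Variables (q : Cx) (n : nat).
Hypotheses (Hq : q != 0) (Hq2 : q * q - 1 != 0).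
Local Notation R1 := (tens_rel (@sl_rel q n) (@so_rel q n)).
Local Notation "a ≡ b" := (eqv R1 a b) (at level 70).

Definition g1 : slgen n -> term Cx (slgen n + sogen n) := fun x => tGen (inl x).
Lemma Hsl1 a b : sl_rel q a b -> eqv R1 (subst g1 a) (subst g1 b).
Proof. by move=> H; apply: eqv_rel; apply: tr_l. Qed.
Lemma tcomm1 (x : slgen n) (y : sogen n) :
  tGen (inr y) ** tGen (inl x) ≡ tGen (inl x) ** tGen (inr y).
Proof. by apply: eqv_sym; apply: eqv_rel; apply: tr_comm. Qed.

Definition emb1 (a b : 'I_n.-1) := embL [:: tGen (inl (gF a)); tGen (inl (gF b));
  tGen (inl (gK a)); tGen (inl (gKi a)); tGen (inl (gK b)); tGen (inl (gKi b));
  tGen (inl (gE a)); tGen (inl (gE b)); tGen (inr (gI a)); tGen (inr (gI b))].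

Lemma qnz : q * q != 0. Proof. by rewrite mulf_neq0. Qed.
Lemma qinz : q^-1 != 0. Proof. by rewrite invr_eq0. Qed.
Lemma qqinz : (q * q)^-1 != 0. Proof. by rewrite invr_eq0 qnz. Qed.
Lemma onz : (1 : Cx) != 0. Proof. exact: oner_neq0. Qed.
Lemma q2z (i : 'I_n.-1) : q ^ cartan i i = q * q.
Proof. rewrite cartan_same; exact: expr2. Qed.
Lemma q2zN (i : 'I_n.-1) : q ^ (- cartan i i) = (q * q)^-1.
Proof. rewrite -invr_expz cartan_same; congr (_^-1); exact: expr2. Qed.
Lemma qadj (i j : 'I_n.-1) : adjacent i j -> q ^ cartan i j = q^-1.
Proof. by move=> H; rewrite cartan_adj // exprN1. Qed.
Lemma qadjN (i j : 'I_n.-1) : adjacent i j -> q ^ (- cartan i j) = q.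
Proof. by move=> H; rewrite cartan_adj // opprK expr1z. Qed.
Lemma qfar (i j : 'I_n.-1) : far i j -> q ^ cartan i j = 1.
Proof. by move=> H; rewrite cartan_far // expr0z. Qed.
Lemma qfarN (i j : 'I_n.-1) : far i j -> q ^ (- cartan i j) = 1.
Proof. by move=> H; rewrite cartan_far // oppr0 expr0z. Qed.

Lemma rok_adj (a b : 'I_n.-1) : adjacent a b ->
  (let al := tGen (inr (gI a)) in let be := tGen (inr (gI b)) in
   be ** (al ** al) ≡ tAdd (tC (qint2 q) ** (al ** (be ** al))) (tAdd (tC (-1) ** (al ** (al ** be))) (tC (-1) ** be))
   /\ be ** (be ** al) ≡ tAdd (tC (qint2 q) ** (be ** (al ** be))) (tAdd (tC (-1) ** (al ** (be ** be))) (tC (-1) ** al))) ->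
  rules_ok R1 (emb1 a b) (rules_adj q).
Proof.
move=> Hab /= [So1 So2].
have Hba : adjacent b a by rewrite adj_sym.
have nab := adj_neq Hab. have nba := adj_neq Hba.
have Caa := q2z a. have Cbb := q2z b. have Faa := q2zN a. have Fbb := q2zN b.
have Cab := qadj Hab. have Cba := qadj Hba. have Fab := qadjN Hab. have Fba := qadjN Hba.
have n1 := qnz. have n2 := qinz. have n3 := qqinz.
rewrite /rules_adj /=.
repeat (split; [rclean; first [RL Hsl1 | apply: tcomm1] |]).
done.
Qed.

Lemma so_adj_facts (i j : 'I_n.-1) : (i.+1 == j :> nat) ->
  (let al := tGen (inr (gI j)) in let be := tGen (inr (gI i)) in
   be ** (al ** al) ≡ tAdd (tC (qint2 q) ** (al ** (be ** al))) (tAdd (tC (-1) ** (al ** (al ** be))) (tC (-1) ** be))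
   /\ be ** (be ** al) ≡ tAdd (tC (qint2 q) ** (be ** (al ** be))) (tAdd (tC (-1) ** (al ** (be ** be))) (tC (-1) ** al))).
Proof.
move=> H /=; pose emb := @embL (slgen n + sogen n)%type [:: tGen (inr (gI j)); tGen (inr (gI i))]; split.
- have E := (eqv_rel (tr_r (@sl_rel q n) (so_1 q H))).
  refine (norm_combo (emb := emb) (k:=1) (rs := [::]) (t1 := G 1 ** (G 0 ** G 0))
   (t2 := tAdd (tC (qint2 q) ** (G 0 ** (G 1 ** G 0))) (tAdd (tC (-1) ** (G 0 ** (G 0 ** G 1))) (tC (-1) ** G 1)))
   (u := tC 1) (v := tC 1)
   (x := tSub (tAdd (G 0 ** G 0 ** G 1) (G 1 ** G 0 ** G 0)) (tC (qint2 q) ** G 0 ** G 1 ** G 0))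
   (y := tOpp (G 1)) _ E _).
    done.
  zsolve.
- have E := (eqv_rel (tr_r (@sl_rel q n) (so_2 q H))).
  refine (norm_combo (emb := emb) (k:=1) (rs := [::]) (t1 := G 1 ** (G 1 ** G 0))
   (t2 := tAdd (tC (qint2 q) ** (G 1 ** (G 0 ** G 1))) (tAdd (tC (-1) ** (G 0 ** (G 1 ** G 1))) (tC (-1) ** G 0)))
   (u := tC 1) (v := tC 1)
   (x := tSub (tAdd (G 1 ** G 1 ** G 0) (G 0 ** G 1 ** G 1)) (tC (qint2 q) ** G 1 ** G 0 ** G 1))
   (y := tOpp (G 0)) _ E _).
    done.
  zsolve.
Qed.

Definition Phia := tAdd (tSub (G 0) (tC q^-1 ** G 2 ** G 6)) (G 2 ** G 8).
Definition Phib := tAdd (tSub (G 1) (tC q^-1 ** G 4 ** G 7)) (G 4 ** G 9).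

Lemma phi_so_adj1 (i j : 'I_n.-1) (H : i.+1 == j :> nat) :
  eqv R1 (subst (@phi q n)
     ((tGen (gI j)) ** (tGen (gI j)) ** (tGen (gI i)) `+ (tGen (gI i)) ** (tGen (gI j)) ** (tGen (gI j))
            `- tC (qint2 q) ** (tGen (gI j)) ** (tGen (gI i)) ** (tGen (gI j))))
   (subst (@phi q n) (tOpp (tGen (gI i)))).
Proof.
have Hab : adjacent j i by rewrite /adjacent H orbT.
have rok := rok_adj Hab (so_adj_facts H).
refine (norm_eq (emb := emb1 j i) (k := 12) (rs := rules_adj q)
  (t1 := tSub (tAdd (Phia ** Phia ** Phib) (Phib ** Phia ** Phia)) (tC (qint2 q) ** Phia ** Phib ** Phia))
  (t2 := tOpp Phib) rok _).
cbv [rules_adj dq Phia Phib]. zsolve.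
Qed.

Lemma phi_so_adj2 (i j : 'I_n.-1) (H : i.+1 == j :> nat) :
  eqv R1 (subst (@phi q n)
     ((tGen (gI i)) ** (tGen (gI i)) ** (tGen (gI j)) `+ (tGen (gI j)) ** (tGen (gI i)) ** (tGen (gI i))
            `- tC (qint2 q) ** (tGen (gI i)) ** (tGen (gI j)) ** (tGen (gI i))))
   (subst (@phi q n) (tOpp (tGen (gI j)))).
Proof.
have Hab : adjacent j i by rewrite /adjacent H orbT.
have rok := rok_adj Hab (so_adj_facts H).
refine (norm_eq (emb := emb1 j i) (k := 12) (rs := rules_adj q)
  (t1 := tSub (tAdd (Phib ** Phib ** Phia) (Phia ** Phib ** Phib)) (tC (qint2 q) ** Phib ** Phia ** Phib))
  (t2 := tOpp Phia) rok _).
cbv [rules_adj dq Phia Phib]. zsolve.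
Qed.

Lemma rok_far (a b : 'I_n.-1) : far a b ->
  tGen (inr (gI b)) ** tGen (inr (gI a)) ≡ tGen (inr (gI a)) ** tGen (inr (gI b)) ->
  rules_ok R1 (emb1 a b) (rules_far q).
Proof.
move=> Hab So.
have Hba : far b a by rewrite far_sym.
have nab := far_neq Hab. have nba := far_neq Hba.
have Caa := q2z a. have Cbb := q2z b. have Faa := q2zN a. have Fbb := q2zN b.
have Cab := qfar Hab. have Cba := qfar Hba. have Fab := qfarN Hab. have Fba := qfarN Hba.
have n1 := qnz. have n2 := onz. have n3 := qqinz.
rewrite /rules_far /=.
repeat (split; [rclean; first [RL Hsl1 | apply: tcomm1] |]).
done.
Qed.

Lemma phi_so_far (i j : 'I_n.-1) (H : far i j) :
  eqv R1 (subst (@phi q n) ((tGen (gI i)) ** (tGen (gI j))))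
   (subst (@phi q n) ((tGen (gI j)) ** (tGen (gI i)))).
Proof.
have So : tGen (inr (gI j)) ** tGen (inr (gI i)) ≡ tGen (inr (gI i)) ** tGen (inr (gI j)).
  by apply: eqv_sym; apply: eqv_rel; apply: (tr_r (@sl_rel q n) (so_3 q H)).
have rok := rok_far H So.
refine (norm_eq (emb := emb1 i j) (k := 12) (rs := rules_far q)
  (t1 := Phia ** Phib) (t2 := Phib ** Phia) rok _).
cbv [rules_far dq Phia Phib]. zsolve.
Qed.

Lemma phi_hom : @is_alg_hom Cx (Uso q n) (tensor (Usl q n) (Uso q n)) (@phi q n).
Proof.
rewrite /is_alg_hom; apply: hom_lift => a b.
case=> [i j H | i j H | i j H].
- exact: phi_so_adj1.
- exact: phi_so_adj2.
- exact: phi_so_far.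
Qed.
End P1.


Section P234.
Variables (q : Cx) (n : nat).
Hypotheses (Hq : q != 0) (Hq2 : q * q - 1 != 0).

Lemma lift_all (X Y : Type) (r : Defs.relation Cx Y) (f1 f2 : X -> term Cx Y) :
  (forall x, eqv r (f1 x) (f2 x)) -> forall a, eqv r (subst f1 a) (subst f2 a).
Proof.
move=> H; elim=> /= [x|c|a Ha b Hb|a Ha b Hb]; first exact: H.
- exact: eqv_refl.
- exact: eqv_add.
- exact: eqv_mul.
Qed.

Lemma part3 (a : term Cx (sogen n)) :
  eqv (@so_rel q n) (subst (@eps_id n) (subst (@phi q n) a)) a.
Proof.
rewrite subst_subst.
have E : subst (fun x => tGen x) a = a by elim: a => //= a -> b ->.
rewrite -[X in eqv _ _ X]E.
apply: lift_all; case=> i.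
pose emb := @embL (sogen n) [:: tGen (gI i)].
refine (norm_eq (emb := emb) (k := 1) (rs := [::])
  (t1 := tAdd (tSub (tC 0) (tC q^-1 ** tC 1 ** tC 0)) (tC 1 ** G 0)) (t2 := G 0) _ _).
  done.
zsolve.
Qed.

Local Notation R4 := (tens_rel (@sl_rel q n) (@sl_rel q n)).
Lemma part4 (a : term Cx (sogen n)) :
  eqv R4 (subst (@id_iota q n) (subst (@phi q n) a)) (subst (@Delta n) (subst (@iota_so q n) a)).
Proof.
rewrite !subst_subst.
apply: lift_all; case=> i.
pose emb := @embL (slgen n + slgen n)%type [:: tGen (inl (gF i)); tGen (inl (gK i)); tGen (inl (gE i));
   tGen (inr (gK i)); tGen (inr (gKi i)); tGen (inr (gE i)); tGen (inr (gF i))].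
have rok : rules_ok R4 emb [:: ([:: 3; 2]%N, [:: (1, [:: 2; 3]%N)]); ([:: 3; 4]%N, [:: (1, [::])])].
  split; [|split=> //]; rclean.
  - by apply: eqv_sym; apply: eqv_rel; apply: tr_comm.
  - by apply: eqv_rel; apply: (tr_r (@sl_rel q n) (sl_kki q i)).
refine (norm_eq (emb := emb) (k := 5)
  (t1 := tAdd (tSub (G 0) (tC q^-1 ** G 1 ** G 2)) (G 1 ** (tSub (G 6) (tC q^-1 ** G 3 ** G 5))))
  (t2 := tSub (tAdd (G 0) (G 1 ** G 6)) (tC q^-1 ** (G 1 ** G 3) ** (tAdd (G 2 ** G 4) (G 5)))) rok _).
zsolve.
Qed.

Local Notation R2 := (tens_rel (@sl_rel q n) (tens_rel (@sl_rel q n) (@so_rel q n))).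
Lemma part2 (a : term Cx (sogen n)) :
  eqv R2 (subst (@Delta_id n) (subst (@phi q n) a)) (subst (@id_phi q n) (subst (@phi q n) a)).
Proof.
rewrite !subst_subst.
apply: lift_all; case=> i.
pose emb := @embL (slgen n + (slgen n + sogen n))%type
  [:: tGen (inl (gF i)); tGen (inl (gK i)); tGen (inl (gE i));
   tGen (inr (inl (gK i))); tGen (inr (inl (gKi i))); tGen (inr (inl (gE i))); tGen (inr (inl (gF i)));
   tGen (inr (inr (gI i)))].
have rok : rules_ok R2 emb [:: ([:: 3; 2]%N, [:: (1, [:: 2; 3]%N)]); ([:: 3; 4]%N, [:: (1, [::])])].
  split; [|split=> //]; rclean.
  - by apply: eqv_sym; apply: eqv_rel; apply: tr_comm.
  - by apply: eqv_rel; apply: (tr_r (@sl_rel q n) (tr_l (@so_rel q n) (sl_kki q i))).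
refine (norm_eq (emb := emb) (k := 5)
  (t1 := tAdd (tSub (tAdd (G 0) (G 1 ** G 6)) (tC q^-1 ** (G 1 ** G 3) ** (tAdd (G 2 ** G 4) (G 5))))
              ((G 1 ** G 3) ** G 7))
  (t2 := tAdd (tSub (G 0) (tC q^-1 ** G 1 ** G 2))
              (G 1 ** tAdd (tSub (G 6) (tC q^-1 ** G 3 ** G 5)) (G 3 ** G 7))) rok _).
zsolve.
Qed.
End P234.

Theorem proposition1 (n : nat) (q : Cx) :
  (2 <= n)%N -> q != 0 -> q != 1 -> q != -1 ->
  (forall m : nat, (0 < m)%N -> q ^+ m != 1) ->
  [/\ (* phi extends to a unital algebra homomorphism U'_q(so_n) -> U_q(sl_n) (x) U'_q(so_n) *)
      @is_alg_hom Cx (Uso q n) (tensor (Usl q n) (Uso q n)) (@phi q n),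
      (* coassociativity of the coaction: (Delta (x) id) o phi = (id (x) phi) o phi *)
      (forall a : term Cx (sogen n),
         eqv (rels (tensor (Usl q n) (tensor (Usl q n) (Uso q n))))
           (subst (@Delta_id n) (subst (@phi q n) a))
           (subst (@id_phi q n) (subst (@phi q n) a))),
      (* counit: (eps (x) id) o phi = id *)
      (forall a : term Cx (sogen n),
         eqv (rels (Uso q n)) (subst (@eps_id n) (subst (@phi q n) a)) a)
    & (* (id (x) iota_so) o phi = Delta o iota_so *)
      (forall a : term Cx (sogen n),
         eqv (rels (tensor (Usl q n) (Usl q n)))
           (subst (@id_iota q n) (subst (@phi q n) a))
           (subst (@Delta n) (subst (@iota_so q n) a)))].
Proof.
move=> _ Hq H1 Hm1 _.
have Hq2 : q * q - 1 != 0.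
  have -> : q * q - 1 = (q - 1) * (q + 1) by ring.
  by rewrite mulf_neq0 // ?subr_eq0 // addr_eq0.
split.
- exact: phi_hom.
- exact: part2.
- exact: part3.
- exact: part4.
Qed.
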